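(* Let $\lambda>0$ be fixed and let $f(v,\lambda)$ be a self-paced regularizer (as defined in the context), with associated optimal weight function $v^{\ast}(\ell,\lambda)$, $\ell\ge 0$. Define $$F_{\lambda}(\ell)=\int_{0}^{\ell} v^{\ast}(l,\lambda)\,dl,\qquad \ell\ge 0.$$ Let $\ell(\mathbf{w})\ge 0$ be a loss depending on a model parameter $\mathbf{w}$. Then for every fixed $\mathbf{w}^{\ast}$ and every $\mathbf{w}$, $$F_{\lambda}(\ell(\mathbf{w}))\le Q_{\lambda}(\mathbf{w}\,|\,\mathbf{w}^{\ast}) := F_{\lambda}(\ell(\mathbf{w}^{\ast}))+v^{\ast}(\ell(\mathbf{w}^{\ast}),\lambda)\bigl(\ell(\mathbf{w})-\ell(\mathbf{w}^{\ast})\bigr).$$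
   Context: A function $f(v,\lambda)$ of a weight variable $v\in[0,1]$ and an age parameter $\lambda>0$ is called a self-paced regularizer (SP-regularizer) if: (1) $f(v,\lambda)$ is convex with respect to $v\in[0,1]$; (2) $v^{\ast}(\ell,\lambda)$ is monotonically decreasing with respect to the loss value $\ell\ge 0$, with $\lim_{\ell\to 0}v^{\ast}(\ell,\lambda)=1$ and $\lim_{\ell\to\infty}v^{\ast}(\ell,\lambda)=0$; (3) $v^{\ast}(\ell,\lambda)$ is monotonically increasing with respect to $\lambda$, with $\lim_{\lambda\to\infty}v^{\ast}(\ell,\lambda)\le 1$ and $\lim_{\lambda\to 0}v^{\ast}(\ell,\lambda)=0$; where $v^{\ast}(\ell,\lambda)=\arg\min_{v\in[0,1]}\bigl(v\ell+f(v,\lambda)\bigr)$ is the optimal weight (treated as a function of $\ell$ and $\lambda$, i.e. a chosen minimizer). Loss values $\ell$ are nonnegative real numbers. *)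

(* Defs.v *)
From Stdlib Require Import Reals.
From Coquelicot Require Import Coquelicot.
Open Scope R_scope.

(* f : R -> R -> R is f(v, lambda); vstar : R -> R -> R is vstar(l, lambda),
   a chosen minimizer of  v * l + f v lambda  over v in [0,1]. *)

Definition convex_on_01 (g : R -> R) : Prop :=
  forall v1 v2 t, 0 <= v1 <= 1 -> 0 <= v2 <= 1 -> 0 <= t <= 1 ->
    g (t * v1 + (1 - t) * v2) <= t * g v1 + (1 - t) * g v2.

Definition is_optimal_weight (f : R -> R -> R) (vstar : R -> R -> R) : Prop :=
  forall l lam, 0 <= l -> 0 < lam ->
    0 <= vstar l lam <= 1 /\
    forall v, 0 <= v <= 1 -> vstar l lam * l + f (vstar l lam) lam <= v * l + f v lam.

Definition SP_regularizer (f : R -> R -> R) (vstar : R -> R -> R) : Prop :=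
  is_optimal_weight f vstar /\
  (forall lam, 0 < lam -> convex_on_01 (fun v => f v lam)) /\
  (forall lam, 0 < lam ->
     (forall l1 l2, 0 <= l1 -> l1 <= l2 -> vstar l2 lam <= vstar l1 lam) /\
     filterlim (fun l => vstar l lam) (at_right 0) (locally 1) /\
     filterlim (fun l => vstar l lam) (Rbar_locally p_infty) (locally 0)) /\
  (forall l, 0 < l ->
     (forall lam1 lam2, 0 < lam1 -> lam1 <= lam2 -> vstar l lam1 <= vstar l lam2) /\
     (exists L, L <= 1 /\
        filterlim (fun lam => vstar l lam) (Rbar_locally p_infty) (locally L)) /\
     filterlim (fun lam => vstar l lam) (at_right 0) (locally 0)).

(* F_lambda(l) = int_0^l vstar(x, lambda) dx  (Riemann integral; vstar is monotone
   in its first argument, hence Riemann integrable on compact intervals). *)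
Definition F_lam (vstar : R -> R -> R) (lam l : R) : R :=
  RInt (fun x => vstar x lam) 0 l.

(* Main.v *)
Require Import Defs.
From Stdlib Require Import Reals Lra Lia Classical.
From Coquelicot Require Import Coquelicot.
Open Scope R_scope.

Lemma step_int (d : R) (z0 : Z) (k : nat) : 0 < d ->
  forall a b (g : R -> R), a <= b ->
  (forall x y, a < x -> x <= y -> y < b -> g y <= g x) ->
  (forall t, a < t < b -> exists z, (z0 <= z <= z0 + Z.of_nat k)%Z /\ g t = d * IZR z) ->
  ex_RInt g a b.
Proof.
  intros Hd. induction k as [|k IH]; intros a b g Hab Hm Hl.
  - apply ex_RInt_ext with (fun _ => d * IZR z0).
    + rewrite Rmin_left by lra. rewrite Rmax_right by lra.
      intros t Ht. destruct (Hl t Ht) as [z [Hz ->]].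
      replace z with z0 by lia. reflexivity.
    + apply ex_RInt_const.
  - set (top := d * IZR (z0 + Z.of_nat (S k))).
    assert (Hle : forall t, a < t < b -> g t <= top).
    { intros t Ht. destruct (Hl t Ht) as [z [Hz ->]]. unfold top.
      apply Rmult_le_compat_l; [lra|]. apply IZR_le. lia. }
    assert (Hlow : forall s t, a <= s -> s < t < b -> g t <> top ->
              exists z, (z0 <= z <= z0 + Z.of_nat k)%Z /\ g t = d * IZR z).
    { intros s t Hs Ht Hne. destruct (Hl t ltac:(lra)) as [z [Hz Hgt]].
      exists z. split; [|exact Hgt].
      assert (z <> z0 + Z.of_nat (S k))%Z.
      { intro E. apply Hne. rewrite Hgt, E. reflexivity. }
      lia. }
    destruct (classic (exists t, a < t < b /\ g t = top)) as [Hex|Hno].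
    + set (E := fun t => a < t < b /\ g t = top).
      assert (HB : bound E). { exists b. intros t [Ht _]. lra. }
      destruct (completeness E HB Hex) as [s [Hub Hlub]].
      destruct Hex as [t0 Ht0].
      assert (Has : a < s). { assert (t0 <= s) by (apply Hub; exact Ht0). destruct Ht0; lra. }
      assert (Hsb : s <= b). { apply Hlub. intros t [Ht _]. lra. }
      apply ex_RInt_Chasles with s.
      * apply ex_RInt_ext with (fun _ => top).
        -- rewrite Rmin_left by lra. rewrite Rmax_right by lra.
           intros t Ht.
           destruct (classic (exists t', E t' /\ t < t')) as [[t' [[Ht' Hgt'] Htt']]|Hn].
           ++ apply Rle_antisym.
              ** rewrite <- Hgt'. apply Hm; lra.
              ** apply Hle. lra.
           ++ exfalso. assert (s <= t).
              { apply Hlub. intros u Hu. destruct (Rle_dec u t) as [|Hnl]; [assumption|].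
                exfalso. apply Hn. exists u. split; [exact Hu | lra]. }
              lra.
        -- apply ex_RInt_const.
      * apply IH; [lra| intros; apply Hm; lra |].
        intros t Ht. apply (Hlow s t); [lra|lra|].
        intro Heq. assert (t <= s) by (apply Hub; split; [lra|exact Heq]). lra.
    + apply IH; [lra| exact Hm |].
      intros t Ht. apply (Hlow a t); [lra|lra|].
      intro Heq. apply Hno. exists t. split; [lra|exact Heq].
Qed.
Lemma Int_part_mono u v : u <= v -> (Int_part u <= Int_part v)%Z.
Proof.
  intros H. destruct (base_Int_part u) as [H1 H2]. destruct (base_Int_part v) as [H3 H4].
  assert (IZR (Int_part u) < IZR (Int_part v + 1)) by (rewrite plus_IZR; lra).
  apply lt_IZR in H0. lia.
Qed.

Lemma mono_int (g : R -> R) a b : a <= b ->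
  (forall x y, a <= x -> x <= y -> y <= b -> g y <= g x) -> ex_RInt g a b.
Proof.
  intros Hab Hm.
  set (cl := fun t => Rmax a (Rmin b t)).
  assert (Hcl : forall t, a <= cl t <= b).
  { intros t; unfold cl, Rmax, Rmin. repeat destruct Rle_dec; lra. }
  assert (Hclm : forall x y, x <= y -> cl x <= cl y).
  { intros x y H; unfold cl, Rmax, Rmin. repeat destruct Rle_dec; lra. }
  set (G := fun t => g (cl t)).
  assert (HGm : forall x y, x <= y -> G y <= G x).
  { intros x y H. unfold G. apply Hm; try apply Hcl. apply Hclm; exact H. }
  apply ex_RInt_ext with G.
  { rewrite Rmin_left by lra. rewrite Rmax_right by lra. intros t Ht.
    unfold G, cl. f_equal. unfold Rmax, Rmin. repeat destruct Rle_dec; lra. }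
  set (d := fun n : nat => / (INR n + 1)).
  assert (Hd : forall n, 0 < d n).
  { intros n. unfold d. apply Rinv_0_lt_compat. pose proof (pos_INR n). lra. }
  set (h := fun (n : nat) t => d n * IZR (Int_part (G t / d n))).
  assert (Hh : forall n t, h n t <= G t < h n t + d n).
  { intros n t. unfold h. destruct (base_Int_part (G t / d n)) as [H1 H2].
    pose proof (Hd n).
    assert (E : G t = d n * (G t / d n)) by (field; lra).
    split.
    - assert (d n * IZR (Int_part (G t / d n)) <= d n * (G t / d n))
        by (apply Rmult_le_compat_l; lra). lra.
    - assert (d n * (G t / d n) < d n * (IZR (Int_part (G t / d n)) + 1))
        by (apply Rmult_lt_compat_l; lra). lra. }
  assert (Hint : forall n, ex_RInt (h n) a b).
  { intros n.
    apply (step_int (d n) (Int_part (g b / d n))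
            (Z.to_nat (Int_part (g a / d n) - Int_part (g b / d n))) (Hd n) a b (h n) Hab).
    - intros x y Hx Hxy Hy. unfold h.
      apply Rmult_le_compat_l; [pose proof (Hd n); lra|]. apply IZR_le.
      apply Int_part_mono. unfold Rdiv. apply Rmult_le_compat_r.
      + left; apply Rinv_0_lt_compat, Hd.
      + apply HGm; exact Hxy.
    - intros t Ht. exists (Int_part (G t / d n)). split; [|reflexivity].
      assert (Hgab : g b <= g a) by (apply Hm; lra).
      assert (Hi : forall u v, u <= v -> (Int_part (u / d n) <= Int_part (v / d n))%Z).
      { intros u v Huv. apply Int_part_mono. unfold Rdiv. apply Rmult_le_compat_r; [|exact Huv].
        left; apply Rinv_0_lt_compat, Hd. }
      assert (G1 : g b <= G t). { unfold G. apply Hm; try apply Hcl; try lra. }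
      assert (G2 : G t <= g a). { unfold G. apply Hm; try apply Hcl; try lra. }
      pose proof (Hi _ _ G1). pose proof (Hi _ _ G2). pose proof (Hi _ _ Hgab).
      rewrite Znat.Z2Nat.id by lia. lia. }
  destruct (filterlim_RInt h a b eventually _ G (fun n => RInt (h n) a b)) as [If [_ HIf]].
  - intros n. apply RInt_correct, Hint.
  - apply filterlim_locally. intros eps.
    destruct (archimed (/ eps)) as [Ha _].
    assert (Hpos : 0 < / eps) by (apply Rinv_0_lt_compat, cond_pos).
    assert (HIZ : (0 <= up (/ eps))%Z) by (apply le_IZR; simpl; lra).
    exists (Z.to_nat (up (/ eps))). intros n Hn t.
    unfold ball; simpl. unfold AbsRing_ball, abs, minus, plus, opp; simpl.
    specialize (Hh n t).
    assert (d n < eps).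
    { unfold d. apply (le_INR _ _) in Hn. rewrite INR_IZR_INZ, Znat.Z2Nat.id in Hn by exact HIZ.
      pose proof (cond_pos eps).
      apply Rlt_le_trans with (/ (/ eps)).
      - apply Rinv_lt_contravar; [nra|lra].
      - rewrite Rinv_inv. lra. }
    apply Rabs_def1; lra.
  - exists If. exact HIf.
Qed.

Theorem theorem1 (f vstar : R -> R -> R) (lam : R) (W : Type) (loss : W -> R) :
  0 < lam ->
  SP_regularizer f vstar ->
  (forall w, 0 <= loss w) ->
  forall wstar w : W,
    F_lam vstar lam (loss w) <=
    F_lam vstar lam (loss wstar) + vstar (loss wstar) lam * (loss w - loss wstar).
Proof.
  intros Hlam [_ [_ [H2 _]]] Hl wstar w.
  destruct (H2 lam Hlam) as [Hdec _].
  set (v := fun x => vstar x lam).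
  assert (Hi : forall a b, 0 <= a -> a <= b -> ex_RInt v a b).
  { intros a b Ha Hab. apply mono_int; [exact Hab|]. intros x y Hx Hxy Hy.
    unfold v. apply Hdec; lra. }
  set (A := loss wstar). set (B := loss w).
  pose proof (Hl wstar) as HA. pose proof (Hl w) as HB. fold A in HA. fold B in HB.
  unfold F_lam. fold v.
  assert (HAB : ex_RInt v A B).
  { destruct (Rle_dec A B).
    - apply Hi; lra.
    - apply ex_RInt_swap, Hi; lra. }
  assert (Hch : RInt v 0 B = RInt v 0 A + RInt v A B).
  { rewrite <- (RInt_Chasles v 0 A B); [reflexivity| apply Hi; lra | exact HAB]. }
  rewrite Hch.
  enough (RInt v A B <= v A * (B - A)) by (unfold v in *; lra).
  destruct (Rle_dec A B) as [Hle|Hlt].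
  - apply Rle_trans with (RInt (fun _ => v A) A B).
    + apply RInt_le; [exact Hle | exact HAB | apply ex_RInt_const |].
      intros x Hx. unfold v. apply Hdec; lra.
    + rewrite RInt_const. unfold scal; simpl. unfold mult; simpl. lra.
  - assert (HBA : ex_RInt v B A) by (apply Hi; lra).
    rewrite <- (opp_RInt_swap v B A HBA).
    assert (RInt (fun _ => v A) B A <= RInt v B A).
    { apply RInt_le; [lra | apply ex_RInt_const | exact HBA |].
      intros x Hx. unfold v. apply Hdec; lra. }
    rewrite RInt_const in H. unfold scal in H; simpl in H. unfold mult in H; simpl in H.
    unfold opp; simpl. lra.
Qed.
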